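(* Let $r, J, L \ge 1$ be integers. Let $\mathbf{H}(X) = [h_{j,l}(X)]_{j \in [J], l \in [L]}$ be a $J \times L$ matrix whose entries are elements of $\mathbb{F}_2[X]/\langle X^r - 1\rangle$, each of which is either $0$, a monomial $X^{a}$, or a binomial $X^{a} + X^{b}$ with $a \not\equiv b \pmod r$. Let $H$ be the associated $Jr \times Lr$ binary parity-check matrix, and assume that $H$ has constant column weight and constant row weight. For each $j,l$ let $E_{j,l} \subseteq \mathbb{Z}_r$ be the set of exponents occurring in $h_{j,l}(X)$ (empty, one element, or two elements respectively). For $i, j \in [J]$ let $\mathbf{d}_{ij}$ be the multiset $\{(e - e') \bmod r : l \in [L],\ e \in E_{i,l},\ e' \in E_{j,l}\}$ (pairs with $e=e'$ when $i=j$ included). Then the code $C(H)$ is dual-containing if and only if $\mathbf{d}_{ij}$ is multiplicity even for all $i, j \in [J]$.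
   Context: The binary matrix $H$ associated with $\mathbf{H}(X)$ is obtained by replacing each entry $h_{j,l}(X) = \sum_{s=0}^{r-1} c_s X^s$ by the $r \times r$ binary circulant matrix whose first row is $(c_0, \ldots, c_{r-1})$ (each subsequent row being the cyclic right shift by one of the previous row). $C(H)$ denotes the binary linear code that is the null space of $H$. The code $C(H)$ is called dual-containing if $C(H)^\perp \subseteq C(H)$, equivalently $H H^T = 0$ over $\mathbb{F}_2$. A multiset is multiplicity even if every element occurs an even number of times (the empty multiset is multiplicity even). $[J] = \{1, \ldots, J\}$. *)

(* Defs.v *)
From HB Require Import structures.
From mathcomp Require Import all_boot all_order all_algebra.
Set Implicit Arguments. Unset Strict Implicit. Unset Printing Implicit Defensive.
Import GRing.Theory.
Local Open Scope ring_scope.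

Definition ord_sub (r : nat) (t s : 'I_r) : 'I_r :=
  Ordinal (ltn_pmod (t + r - s) (leq_ltn_trans (leq0n s) (ltn_ord s))).

(* r x r binary circulant matrix with first row (c_0,...,c_{r-1});
   row s is the cyclic right shift by s of row 0: entry (s,t) = c_{(t-s) mod r}. *)
Definition circulant (r : nat) (c : 'I_r -> 'F_2) : 'M['F_2]_r :=
  \matrix_(s < r, t < r) c (ord_sub t s).

(* The binary matrix H associated with H(X): entry h_{j,l}(X) = sum_s c j l s X^s
   is replaced by circulant (c j l).  Its size is (sum_{j<J} r) x (sum_{l<L} r) = Jr x Lr. *)
Definition assoc_matrix (r J L : nat) (c : 'I_J -> 'I_L -> 'I_r -> 'F_2) :
  'M['F_2]_(\sum_(j < J) r, \sum_(l < L) r) :=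
  \mxblock_(j < J, l < L) circulant (c j l).

Definition exps (r : nat) (c : 'I_r -> 'F_2) : {set 'I_r} := [set s | c s != 0].

Definition code (m n : nat) (H : 'M['F_2]_(m, n)) : {set 'rV['F_2]_n} :=
  [set v | H *m v^T == 0].
Definition dual_code (n : nat) (C : {set 'rV['F_2]_n}) : {set 'rV['F_2]_n} :=
  [set u | [forall v in C, u *m v^T == 0]].
Definition dual_containing (m n : nat) (H : 'M['F_2]_(m, n)) : Prop :=
  dual_code (code H) \subset code H.

Definition const_col_weight (m n : nat) (H : 'M['F_2]_(m, n)) : Prop :=
  exists w, forall q : 'I_n, #|[set p : 'I_m | H p q != 0]| = w.
Definition const_row_weight (m n : nat) (H : 'M['F_2]_(m, n)) : Prop :=
  exists w, forall p : 'I_m, #|[set q : 'I_n | H p q != 0]| = w.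

Definition dmultiset (r J L : nat) (c : 'I_J -> 'I_L -> 'I_r -> 'F_2) (i j : 'I_J)
  : seq 'I_r :=
  flatten [seq [seq ord_sub e e' | e <- enum (exps (c i l)), e' <- enum (exps (c j l))]
          | l <- enum 'I_L].

Definition mult_even (T : eqType) (s : seq T) : Prop :=
  forall x : T, ~~ odd (count_mem x s).

(* Main.v *)
Require Import Defs.
From mathcomp Require Import all_boot all_order all_algebra.
Import GRing.Theory.
Set Implicit Arguments. Unset Strict Implicit. Unset Printing Implicit Defensive.

Lemma ord_subP (r : nat) (x t s : 'I_r) : (x == ord_sub t s) = (x + s == t %[mod r])%N.
Proof.
have Hs: (s <= t + r)%N by apply: leq_trans (ltnW (ltn_ord s)) (leq_addl _ _).
apply/eqP/idP => [->|H].
  by rewrite /= modnDml subnK // modnDr.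
apply/val_inj => /=; rewrite -(modn_small (ltn_ord x)).
apply/eqP; rewrite -(eqn_modDr s) subnK // modnDr; exact: H.
Qed.

Lemma ord_subE (r : nat) (x t s : 'I_r) : (x + s = t %[mod r])%N -> ord_sub t s = x.
Proof. by move=> H; apply/esym/eqP; rewrite ord_subP; apply/eqP. Qed.

Lemma ord_subM (r : nat) (t s : 'I_r) : (ord_sub t s + s = t %[mod r])%N.
Proof. by apply/eqP; rewrite -ord_subP. Qed.

Definition ord_add (r : nat) (e s : 'I_r) : 'I_r :=
  Ordinal (ltn_pmod (e + s) (leq_ltn_trans (leq0n s) (ltn_ord s))).

Lemma ord_addK (r : nat) (s e : 'I_r) : ord_sub (ord_add e s) s = e.
Proof. by apply: ord_subE; rewrite /= modn_mod. Qed.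

Lemma ord_add_sub (r : nat) (e s t : 'I_r) :
  ord_sub (ord_add e s) t = ord_sub e (ord_sub t s).
Proof.
apply: ord_subE.
have h1 := ord_subM t s; have h2 := ord_subM e (ord_sub t s).
rewrite /= modn_mod -modnDmr -h1 modnDmr addnA -modnDml h2 modnDml //.
Qed.

Local Open Scope ring_scope.
Lemma F2_01 (a : 'F_2) : a = (a != 0)%:R.
Proof. by case: a => [[|[|n]] Hn] //; apply/val_inj. Qed.

Lemma count_pairs (r : nat) (E1 E2 : {set 'I_r}) (x : 'I_r) :
  count_mem x [seq ord_sub e e' | e <- enum E1, e' <- enum E2] =
  (\sum_(e in E1) (ord_sub e x \in E2))%N.
Proof.
rewrite -sum1_count big_mkcond /= big_allpairs_dep big_enum /=.
apply: eq_bigr => e _; rewrite big_enum /=.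
under eq_bigr => e' _ do rewrite eq_sym ord_subP addnC -ord_subP.
rewrite -big_mkcondr /=.
case: (boolP (ord_sub e x \in E2)) => H.
  rewrite (big_pred1 (ord_sub e x)) // => y /=.
  by case: eqP => [->|]; rewrite ?H ?andbF.
by rewrite big_pred0 // => y; case: eqP => [->|]; rewrite ?(negPf H) ?andbF.
Qed.

Lemma F2_nat (n : nat) : ((n%:R : 'F_2) == 0) = ~~ odd n.
Proof. by rewrite -Fp_nat_mod // modn2; case: (odd n). Qed.

Lemma circ_prod (r : nat) (c1 c2 : 'I_r -> 'F_2) (s t : 'I_r) :
  (circulant c1 *m (circulant c2)^T) s t =
  (\sum_(e in exps c1) (ord_sub e (ord_sub t s) \in exps c2))%:R.
Proof.
rewrite /circulant !mxE.
rewrite (eq_bigr (fun u => c1 (ord_sub u s) * c2 (ord_sub u t))); last by move=> u _; rewrite !mxE.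
rewrite (reindex_inj (h := fun e => ord_add e s)); last first.
  by move=> a b /(congr1 (fun z => ord_sub z s)); rewrite !ord_addK.
rewrite natr_sum [RHS]big_mkcond /=; apply: eq_bigr => e _.
rewrite ord_addK ord_add_sub !inE.
rewrite [c1 e]F2_01 [c2 _]F2_01.
by case: (c1 e != 0); case: (c2 _ != 0); rewrite ?mulr0 ?mul0r ?mulr1.
Qed.

Lemma col_mul' (m n k : nat) (j : 'I_k) (A : 'M['F_2]_(m, n)) (B : 'M['F_2]_(n, k)) :
  col j (A *m B) = A *m col j B.
Proof. by apply/matrixP => a b; rewrite !mxE; apply: eq_bigr => u _; rewrite !mxE. Qed.

Lemma colP0 (m n : nat) (M : 'M['F_2]_(m, n)) :
  (forall p, col p M = 0) -> M = 0.
Proof.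
move=> h; apply/matrixP => q p.
by have /matrixP /(_ q 0) := h p; rewrite !mxE.
Qed.

Lemma dual_containingE (m n : nat) (H : 'M['F_2]_(m, n)) :
  dual_containing H <-> H *m H^T = 0.
Proof.
split.
  move=> D; apply: colP0 => p.
  have : row p H \in dual_code (code H).
    rewrite inE; apply/forall_inP => v; rewrite inE => /eqP Hv.
    by rewrite -row_mul Hv row0.
  move/(subsetP D); rewrite inE => /eqP.
  by rewrite col_mul' tr_row.
move=> HH; apply/subsetP => u; rewrite !inE => /forall_inP Hu.
pose K := kermx H^T.
have uK : u *m K^T = 0.
  apply: colP0 => p; rewrite col_mul' -tr_row; apply/eqP/Hu.
  by rewrite inE -[H in H *m _]trmxK -trmx_mul -row_mul mulmx_ker row0 trmx0.
have HK : (H <= kermx K^T)%MS.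
  by apply/sub_kermxP; rewrite -(trmxK H) -trmx_mul mulmx_ker trmx0.
have rk : \rank (kermx K^T) = \rank H.
  rewrite mxrank_ker mxrank_tr mxrank_ker mxrank_tr subKn //.
  exact: rank_leq_col.
have KH : (kermx K^T <= H)%MS.
  by rewrite -(mxrank_leqif_sup HK).2 rk.
have : (u <= H)%MS by apply: submx_trans KH; apply/sub_kermxP.
case/submxP => D ->.
by rewrite trmx_mul mulmxA HH mul0mx.
Qed.

Lemma count_d (r J L : nat) (c : 'I_J -> 'I_L -> 'I_r -> 'F_2) (i k : 'I_J) (x : 'I_r) :
  count_mem x (dmultiset c i k) =
  (\sum_l \sum_(e in exps (c i l)) (ord_sub e x \in exps (c k l)))%N.
Proof.
rewrite /dmultiset -sum1_count big_flatten /= big_map big_enum /=.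
by apply: eq_big => // l _; rewrite sum1_count count_pairs.
Qed.

Lemma block_entry (r J L : nat) (c : 'I_J -> 'I_L -> 'I_r -> 'F_2) (i k : 'I_J) (s t : 'I_r) :
  (\sum_l (circulant (c i l) *m (circulant (c k l))^T)) s t =
  (count_mem (ord_sub t s) (dmultiset c i k))%:R.
Proof.
rewrite summxE count_d natr_sum; apply: eq_bigr => l _; exact: circ_prod.
Qed.

Lemma HHt (r J L : nat) (c : 'I_J -> 'I_L -> 'I_r -> 'F_2) :
  assoc_matrix c *m (assoc_matrix c)^T =
  \mxblock_(i, k) \sum_l (circulant (c i l) *m (circulant (c k l))^T).
Proof. by rewrite /assoc_matrix tr_mxblock mul_mxblock. Qed.

Theorem theorem10 (r J L : nat) (c : 'I_J -> 'I_L -> 'I_r -> 'F_2) :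
  (0 < r)%N -> (0 < J)%N -> (0 < L)%N ->
  (* each entry is 0, a monomial X^a, or a binomial X^a + X^b with a <> b mod r *)
  (forall (j : 'I_J) (l : 'I_L), #|exps (c j l)| <= 2)%N ->
  const_col_weight (assoc_matrix c) ->
  const_row_weight (assoc_matrix c) ->
  (dual_containing (assoc_matrix c) <->
   forall i j : 'I_J, mult_even (dmultiset c i j)).
Proof.
move=> r0 _ _ _ _ _.
apply: iff_trans (dual_containingE _) _; rewrite HHt; split.
  move=> h i j x.
  have /matrixP /(_ (Ordinal r0) x) := congr1 (fun M => submxblock M i j) h.
  rewrite mxblockK submxblock0 block_entry mxE.
  have -> : ord_sub x (Ordinal r0) = x by apply: ord_subE; rewrite addn0.
  by move/eqP; rewrite F2_nat.
move=> h; rewrite -(mxblock0 (p_ := fun _ : 'I_J => r) (q_ := fun _ : 'I_J => r)).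
apply: eq_mxblock => i k; apply/matrixP => s t.
by rewrite block_entry mxE; apply/eqP; rewrite F2_nat; apply: h.
Qed.
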